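(* Let $P$ and $P_{\rm n}$ be two inverse demand functions, each continuous and strictly decreasing with a zero, each satisfying (A2) with the same $c$ and $\Theta$. Suppose that for all $q'<q$, $P(q)-P_{\rm n}(q)<P(q')-P_{\rm n}(q')$, and that $P_{\rm n}(P^{-1}(\underline\theta))=\underline\theta$. Let $\mathcal D(P)$ (resp. $\mathcal D(P_{\rm n})$) be the set of deterministic undominated mechanisms when the inverse demand function is $P$ (resp. $P_{\rm n}$). Then $\mathcal D(P_{\rm n})\subseteq\mathcal D(P)$.
   Context: Setting (for a given inverse demand function $P$). Let $\Theta=[\underline\theta,\overline\theta]$ with $0<\underline\theta<\overline\theta$. Let $c>0$ and let $P:\mathbb R_+\to\mathbb R_+$ be continuous and strictly decreasing with $P(\overline q)=0$ for some $\overline q>0$. Put $V(q)=\int_0^q P(z)\,dz$ and $\mathrm{TS}(\theta,q)=V(q)-c-\theta q$ for $q>0$, $\mathrm{TS}(\theta,0)=0$. Assume (A2): $\mathrm{TS}(\overline\theta,P^{-1}(\overline\theta))>0$. A mechanism is a triple $M=(r,q,u)$ of functions $r:\Theta\to[0,1]$, $q:\Theta\to\mathbb R_+$, $u:\Theta\to\mathbb R$ with $q(\theta)=0$ if and only if $r(\theta)=0$. It is IC if $u(\theta)\ge u(\theta')+(\theta'-\theta)q(\theta')r(\theta')$ for all $\theta,\theta'\in\Theta$, and IR if $u(\theta)\ge 0$ for all $\theta$. (Known fact: $M$ is IC iff $\theta\mapsto q(\theta)r(\theta)$ is nonincreasing and $u(\theta)=u(\overline\theta)+\int_\theta^{\overline\theta}q(z)r(z)\,dz$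 for all $\theta$; an IC mechanism is IR iff $u(\overline\theta)\ge0$.) A mechanism is deterministic if $r(\theta)\in\{0,1\}$ for all $\theta$. Fix $\alpha\in[0,1)$. The regulator's surplus at $\theta$ is $\mathrm{RS}_\alpha(\theta,M)=r(\theta)\,\mathrm{TS}(\theta,q(\theta))-(1-\alpha)u(\theta)$ (with $V$, $\mathrm{TS}$ computed from the relevant inverse demand function). An IC and IR mechanism $\tilde M$ dominates an IC and IR mechanism $M$ if $\mathrm{RS}_\alpha(\theta,\tilde M)\ge \mathrm{RS}_\alpha(\theta,M)$ for all $\theta\in\Theta$ with strict inequality for some $\theta$; $M$ is undominated if it is IC, IR and not dominated by any IC and IR mechanism. *)

(* Defs.v *)
From Stdlib Require Import Reals Lra.
From Coquelicot Require Import Coquelicot.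
Open Scope R_scope.

(* Inverse demand function: defined on R_+ (values at negative arguments are irrelevant). *)
Definition inverse_demand (P : R -> R) : Prop :=
  (forall x, 0 <= x -> filterlim P (within (fun y => 0 <= y) (locally x)) (locally (P x))) /\
  (forall x y, 0 <= x -> x < y -> P y < P x) /\
  (exists qbar, 0 < qbar /\ P qbar = 0).

Definition Vf (P : R -> R) (q : R) : R := RInt P 0 q.

Definition TS (P : R -> R) (c theta q : R) : R :=
  if Req_EM_T q 0 then 0 else Vf P q - c - theta * q.

Definition inTheta (tl th t : R) : Prop := tl <= t <= th.

(* (A2): TS(th, P^{-1}(th)) > 0, with P^{-1}(th) the q >= 0 such that P q = th *)
Definition A2 (P : R -> R) (c tl th : R) : Prop :=
  exists q, 0 <= q /\ P q = th /\ TS P c th q > 0.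

Definition mechanism (tl th : R) (r q u : R -> R) : Prop :=
  forall t, inTheta tl th t ->
    0 <= r t <= 1 /\ 0 <= q t /\ (q t = 0 <-> r t = 0).

Definition IC (tl th : R) (r q u : R -> R) : Prop :=
  forall t t', inTheta tl th t -> inTheta tl th t' ->
    u t >= u t' + (t' - t) * q t' * r t'.

Definition IR (tl th : R) (u : R -> R) : Prop :=
  forall t, inTheta tl th t -> u t >= 0.

Definition deterministic (tl th : R) (r : R -> R) : Prop :=
  forall t, inTheta tl th t -> r t = 0 \/ r t = 1.

Definition RS (P : R -> R) (c alpha t : R) (r q u : R -> R) : R :=
  r t * TS P c t (q t) - (1 - alpha) * u t.

Definition feasible (tl th : R) (r q u : R -> R) : Prop :=
  mechanism tl th r q u /\ IC tl th r q u /\ IR tl th u.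

Definition dominates (P : R -> R) (c alpha tl th : R) (r' q' u' r q u : R -> R) : Prop :=
  feasible tl th r' q' u' /\ feasible tl th r q u /\
  (forall t, inTheta tl th t -> RS P c alpha t r' q' u' >= RS P c alpha t r q u) /\
  (exists t, inTheta tl th t /\ RS P c alpha t r' q' u' > RS P c alpha t r q u).

Definition undominated (P : R -> R) (c alpha tl th : R) (r q u : R -> R) : Prop :=
  feasible tl th r q u /\
  ~ (exists r' q' u', dominates P c alpha tl th r' q' u' r q u).

Definition in_D (P : R -> R) (c alpha tl th : R) (r q u : R -> R) : Prop :=
  deterministic tl th r /\ undominated P c alpha tl th r q u.

(* Main.v *)
Require Import Defs.
From Stdlib Require Import Reals Lra Lia List Classical_Prop.
From Coquelicot Require Import Coquelicot.
Open Scope R_scope.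

Definition nice (f : R -> R) : Prop :=
  (forall x y, 0 <= x -> 0 <= y -> ex_RInt f x y) /\
  (forall x y, 0 <= x -> x <= y -> f y <= f x).

Lemma RInt_cst_R (k a b : R) : RInt (fun _ => k) a b = (b - a) * k.
Proof. rewrite RInt_const. reflexivity. Qed.

Lemma Vdiff f (Hf : nice f) a b : 0 <= a -> 0 <= b -> RInt f 0 b - RInt f 0 a = RInt f a b.
Proof.
  intros Ha Hb. destruct Hf as [He _].
  rewrite <- (RInt_Chasles f 0 a b) by (apply He; lra).
  change (plus (RInt f 0 a) (RInt f a b)) with (RInt f 0 a + RInt f a b). ring.
Qed.

Lemma int_bounds f (Hf : nice f) a b : 0 <= a <= b ->
  (b - a) * f b <= RInt f a b <= (b - a) * f a.
Proof.
  intros [Ha Hab]. destruct Hf as [He Hm]. split.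
  - rewrite <- RInt_cst_R. apply RInt_le; auto.
    + apply (ex_RInt_const (V:=R_CompleteNormedModule)).
    + apply He; lra.
    + intros x Hx. apply Hm; lra.
  - rewrite <- RInt_cst_R. apply RInt_le; auto.
    + apply He; lra.
    + apply (ex_RInt_const (V:=R_CompleteNormedModule)).
    + intros x Hx. apply Hm; lra.
Qed.

Definition sdec (f : R -> R) : Prop := forall x y, 0 <= x -> x < y -> f y < f x.

Lemma int_strict f (Hf : nice f) (Hs : sdec f) a b : 0 <= a < b ->
  (b - a) * f b < RInt f a b /\ RInt f a b < (b - a) * f a.
Proof.
  intros [Ha Hab].
  set (m := (a + b) / 2).
  assert (Hm1 : a < m) by (unfold m; lra). assert (Hm2 : m < b) by (unfold m; lra).
  pose proof (Vdiff f Hf a m Ha ltac:(lra)) as E1.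
  pose proof (Vdiff f Hf m b ltac:(lra) ltac:(lra)) as E2.
  pose proof (Vdiff f Hf a b Ha ltac:(lra)) as E3.
  pose proof (int_bounds f Hf a m ltac:(lra)).
  pose proof (int_bounds f Hf m b ltac:(lra)).
  pose proof (Hs m b ltac:(lra) Hm2). pose proof (Hs a m Ha Hm1).
  split; nra.
Qed.

Lemma TS_0 P c t : TS P c t 0 = 0.
Proof. unfold TS. destruct (Req_EM_T 0 0); [reflexivity|congruence]. Qed.

Lemma TS_pos P c t q : q <> 0 -> TS P c t q = Vf P q - c - t * q.
Proof. intros H. unfold TS. destruct (Req_EM_T q 0); [congruence|reflexivity]. Qed.

Lemma TS_opt P c th X r y (Hf : nice P) :
  0 < X -> Vf P X - X * P X >= c -> P X >= th -> 0 <= r <= 1 -> 0 <= y ->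
  (r * y <= X \/ P X = th) -> r * TS P c th y <= TS P c th X.
Proof.
  intros HX HCS HPX Hr Hy Hor.
  rewrite (TS_pos P c th X) by lra.
  assert (HT : Vf P X - c - th * X >= 0) by nra.
  destruct (Req_EM_T y 0) as [->|Hy0].
  { rewrite TS_0. lra. }
  rewrite (TS_pos P c th y Hy0).
  pose proof (Vdiff P Hf X y ltac:(lra) Hy) as E. unfold Vf.
  destruct (Rle_lt_dec y X) as [HyX|HyX].
  - pose proof (Vdiff P Hf y X Hy ltac:(lra)) as E2.
    pose proof (int_bounds P Hf y X ltac:(lra)) as [B1 B2].
    assert (RInt P 0 X - c - th * X >= RInt P 0 y - c - th * y) by nra.
    unfold Vf in HT.
    destruct (Rle_lt_dec 0 (RInt P 0 y - c - th * y)); nra.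
  - pose proof (int_bounds P Hf X y ltac:(lra)) as [B1 B2].
    unfold Vf in *.
    destruct Hor as [Hor|Hor].
    + nra.
    + assert (RInt P 0 y - c - th * y <= RInt P 0 X - c - th * X) by nra.
      destruct (Rle_lt_dec 0 (RInt P 0 y - c - th * y)); nra.
Qed.

Fixpoint csum (Y : R -> R) (th t : R) (l : list R) : R :=
  match l with nil => (th - t) * Y th | s :: l' => (s - t) * Y s + csum Y th s l' end.
Fixpoint chain (th t : R) (l : list R) : Prop :=
  match l with nil => t <= th | s :: l' => t <= s /\ chain th s l' end.

Definition monoY (Y : R -> R) tl th :=
  (forall x y, tl <= x -> x <= y -> y <= th -> Y y <= Y x) /\
  (forall x, tl <= x <= th -> 0 <= Y x).

Lemma chain_le th t l : chain th t l -> t <= th.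
Proof. revert t; induction l as [|s l IH]; simpl; intros t H; [lra|]. destruct H as [H1 H2]. apply IH in H2. lra. Qed.

Lemma csum_nn Y tl th (HY : monoY Y tl th) l : forall t, tl <= t -> chain th t l -> 0 <= csum Y th t l.
Proof.
  destruct HY as [Hm Hn].
  induction l as [|s l IH]; simpl; intros t Ht H.
  - apply Rmult_le_pos; [lra|apply Hn; lra].
  - destruct H as [H1 H2]. pose proof (chain_le _ _ _ H2).
    pose proof (IH s ltac:(lra) H2). pose proof (Hn s ltac:(lra)). nra.
Qed.

Lemma csum_split Y tl th (HY : monoY Y tl th) l : forall t t', tl <= t -> t <= t' -> t' <= th ->
  chain th t l -> exists l', chain th t' l' /\ csum Y th t l <= (t' - t) * Y t + csum Y th t' l'.
Proof.
  destruct HY as [Hm Hn].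
  induction l as [|s l IH]; simpl; intros t t' Ht Htt' Ht' H.
  - exists nil. simpl. split; [lra|].
    pose proof (Hm t th Ht ltac:(lra) ltac:(lra)). nra.
  - destruct H as [H1 H2]. pose proof (chain_le _ _ _ H2).
    destruct (Rle_lt_dec s t') as [Hst|Hst].
    + destruct (IH s t' ltac:(lra) Hst Ht' H2) as [l' [Hl' Hc]].
      exists l'. split; auto. pose proof (Hm t s Ht H1 ltac:(lra)). pose proof (Hn s ltac:(lra)). nra.
    + exists (s :: l). simpl. split; [split; [lra|auto]|].
      pose proof (Hm t s Ht H1 ltac:(lra)). pose proof (Hn s ltac:(lra)). nra.
Qed.

Lemma csum_IC Y tl th (HY : monoY Y tl th) (X u : R -> R)
  (HIC : forall a b, tl <= a -> a <= b -> b <= th -> u a - u b >= (b - a) * X b)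
  (HYX : forall x, tl <= x <= th -> Y x <= X x) l :
  forall t, tl <= t -> chain th t l -> csum Y th t l <= u t - u th.
Proof.
  induction l as [|s l IH]; simpl; intros t Ht H.
  - pose proof (HIC t th Ht H ltac:(lra)). pose proof (HYX th ltac:(lra)). nra.
  - destruct H as [H1 H2]. pose proof (chain_le _ _ _ H2).
    pose proof (IH s ltac:(lra) H2). pose proof (HIC t s Ht H1 H). pose proof (HYX s ltac:(lra)). nra.
Qed.


Lemma csum_ub Y tl th (HY : monoY Y tl th) l : forall t, tl <= t -> chain th t l -> csum Y th t l <= (th - t) * Y t.
Proof.
  destruct HY as [Hm Hn].
  induction l as [|s l IH]; simpl; intros t Ht H.
  - pose proof (Hm t th Ht H ltac:(lra)). nra.
  - destruct H as [H1 H2]. pose proof (chain_le _ _ _ H2).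
    pose proof (IH s ltac:(lra) H2). pose proof (Hm t s Ht H1 ltac:(lra)). pose proof (Hn s ltac:(lra)). nra.
Qed.

Definition Ssup (Y : R -> R) (th t : R) : R :=
  real (Lub_Rbar (fun z => exists l, chain th t l /\ z = csum Y th t l)).

Lemma Ssup_spec Y tl th (HY : monoY Y tl th) t : tl <= t <= th ->
  (forall l, chain th t l -> csum Y th t l <= Ssup Y th t) /\
  (forall b, (forall l, chain th t l -> csum Y th t l <= b) -> Ssup Y th t <= b).
Proof.
  intros Ht. unfold Ssup.
  set (E := fun z => exists l, chain th t l /\ z = csum Y th t l).
  pose proof (Lub_Rbar_correct E) as [H1 H2].
  assert (Hne : E (csum Y th t nil)) by (exists nil; simpl; split; [lra|reflexivity]).
  assert (Hb : is_ub_Rbar E ((th - t) * Y t)).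
  { intros z [l [Hl ->]]. simpl. apply (csum_ub Y tl th HY l t); lra || auto. }
  destruct (Lub_Rbar E) as [s| |] eqn:Hs.
  - simpl. split.
    + intros l Hl. apply (H1 (csum Y th t l)). exists l; auto.
    + intros b Hbb. apply (H2 (Finite b)). intros z [l [Hl ->]]. simpl. apply Hbb; auto.
  - exfalso. specialize (H2 _ Hb). simpl in H2. exact H2.
  - exfalso. specialize (H1 _ Hne). simpl in H1. exact H1.
Qed.

Definition Prim (Y : R -> R) (th c0 t : R) : R := c0 + Ssup Y th t.

Lemma Prim_IC Y tl th c0 (HY : monoY Y tl th) t t' :
  tl <= t <= th -> tl <= t' <= th -> Prim Y th c0 t >= Prim Y th c0 t' + (t' - t) * Y t'.
Proof.
  intros Ht Ht'. unfold Prim.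
  destruct (Ssup_spec Y tl th HY t Ht) as [A1 A2].
  destruct (Ssup_spec Y tl th HY t' Ht') as [B1 B2].
  destruct (Rle_lt_dec t t') as [Hle|Hlt].
  -
    assert (Ssup Y th t' <= Ssup Y th t - (t' - t) * Y t'); [|lra].
    apply B2. intros l Hl. specialize (A1 (t' :: l)). simpl in A1.
    assert (csum Y th t (t' :: l) = (t' - t) * Y t' + csum Y th t' l) by reflexivity.
    specialize (A1 (conj Hle Hl)). lra.
  -
    assert (Ssup Y th t' <= (t - t') * Y t' + Ssup Y th t); [|lra].
    apply B2. intros l Hl.
    destruct (csum_split Y tl th HY l t' t ltac:(lra) ltac:(lra) ltac:(lra) Hl) as [l' [Hl' Hc]].
    specialize (A1 l' Hl'). lra.
Qed.

Lemma Prim_nn Y tl th c0 (HY : monoY Y tl th) t : tl <= t <= th -> Prim Y th c0 t >= c0.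
Proof.
  intros Ht. unfold Prim. destruct (Ssup_spec Y tl th HY t Ht) as [A1 _].
  specialize (A1 nil ltac:(simpl; lra)). pose proof (csum_nn Y tl th HY nil t ltac:(lra) ltac:(simpl; lra)). lra.
Qed.

Lemma Prim_le Y tl th c0 (HY : monoY Y tl th) (X u : R -> R)
  (HIC : forall a b, tl <= a -> a <= b -> b <= th -> u a - u b >= (b - a) * X b)
  (HYX : forall x, tl <= x <= th -> Y x <= X x) t :
  tl <= t <= th -> Prim Y th c0 t <= c0 + u t - u th.
Proof.
  intros Ht. unfold Prim. destruct (Ssup_spec Y tl th HY t Ht) as [_ A2].
  assert (Ssup Y th t <= u t - u th); [|lra].
  apply A2. intros l Hl. apply (csum_IC Y tl th HY X u HIC HYX l t); lra || auto.
Qed.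

Lemma id_cont_eps (P : R -> R) (HP : inverse_demand P) x (Hx : 0 <= x) (eps : R) :
  0 < eps -> exists del, 0 < del /\ forall y, 0 <= y -> Rabs (y - x) < del -> Rabs (P y - P x) < eps.
Proof.
  intros He. destruct HP as [Hc _].
  specialize (Hc x Hx). apply filterlim_locally with (eps := mkposreal eps He) in Hc.
  destruct Hc as [[d Hd] Hd']. exists d. split; [exact Hd|].
  intros y Hy Hyx. specialize (Hd' y). apply Hd'. exact Hyx. exact Hy.
Qed.

Lemma id_cont_ext (P : R -> R) (HP : inverse_demand P) x :
  continuous (fun y => P (Rmax 0 y)) x.
Proof.
  apply filterlim_locally. intros eps.
  destruct (id_cont_eps P HP (Rmax 0 x) (Rmax_l _ _) eps (cond_pos eps)) as [d [Hd H]].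
  exists (mkposreal d Hd). intros y Hy. simpl in Hy. unfold ball; simpl. unfold AbsRing_ball, abs, minus, plus, opp; simpl.
  apply H. apply Rmax_l.
  unfold ball in Hy; simpl in Hy; unfold AbsRing_ball, abs, minus, plus, opp in Hy; simpl in Hy.
  unfold Rmax; destruct (Rle_dec 0 y); destruct (Rle_dec 0 x); unfold Rabs in *;
   repeat destruct Rcase_abs; lra.
Qed.

Lemma id_ex_RInt (P : R -> R) (HP : inverse_demand P) a b :
  0 <= a -> 0 <= b -> ex_RInt P a b.
Proof.
  intros Ha Hb.
  apply (ex_RInt_ext (fun y => P (Rmax 0 y))).
  - intros x Hx. f_equal. apply Rmax_right.
    destruct Hx as [H1 _]. assert (0 <= Rmin a b) by (apply Rmin_glb; lra). lra.
  - apply (ex_RInt_continuous (V:=R_CompleteNormedModule)). intros; apply id_cont_ext; auto.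
Qed.


Lemma id_nice P : inverse_demand P -> nice P.
Proof.
  intros HP. split.
  - intros; apply id_ex_RInt; auto.
  - intros x y Hx Hxy. destruct HP as [_ [Hd _]]. destruct (Req_dec x y) as [->|]; [lra|].
    left. apply Hd; lra.
Qed.

Lemma id_sdec P : inverse_demand P -> sdec P.
Proof. intros [_ [Hd _]] x y Hx Hxy. apply Hd; auto. Qed.

Lemma TS_up Q c t a b : nice Q -> sdec Q -> 0 < a < b -> Q b >= t -> TS Q c t a < TS Q c t b.
Proof.
  intros Hn Hs Hab Hb. rewrite !TS_pos by lra. unfold Vf.
  pose proof (Vdiff Q Hn a b ltac:(lra) ltac:(lra)).
  pose proof (int_strict Q Hn Hs a b ltac:(lra)) as [H1 _]. nra.
Qed.

Lemma TS_down Q c t a b : nice Q -> sdec Q -> 0 < a < b -> Q a <= t -> TS Q c t b < TS Q c t a.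
Proof.
  intros Hn Hs Hab Hb. rewrite !TS_pos by lra. unfold Vf.
  pose proof (Vdiff Q Hn a b ltac:(lra) ltac:(lra)).
  pose proof (int_strict Q Hn Hs a b ltac:(lra)) as [_ H1]. nra.
Qed.

Definition upd (f : R -> R) (t0 v : R) : R -> R := fun t => if Req_EM_T t t0 then v else f t.

Lemma upd_eq f t0 v : upd f t0 v t0 = v.
Proof. unfold upd. destruct (Req_EM_T t0 t0); congruence. Qed.
Lemma upd_neq f t0 v t : t <> t0 -> upd f t0 v t = f t.
Proof. unfold upd. destruct (Req_EM_T t t0); congruence. Qed.

Lemma ICx tl th r q u t t' : IC tl th r q u -> inTheta tl th t -> inTheta tl th t' ->
  u t - u t' >= (t' - t) * (q t' * r t').
Proof. intros H H1 H2. specialize (H t t' H1 H2). lra. Qed.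

Lemma Xmono tl th r q u t t' : IC tl th r q u -> tl <= t -> t <= t' -> t' <= th ->
  q t' * r t' <= q t * r t.
Proof.
  intros H H1 H2 H3.
  destruct (Req_dec t t') as [->|Hne]; [lra|].
  pose proof (ICx tl th r q u t t' H ltac:(unfold inTheta; lra) ltac:(unfold inTheta; lra)).
  pose proof (ICx tl th r q u t' t H ltac:(unfold inTheta; lra) ltac:(unfold inTheta; lra)).
  assert ((t' - t) * (q t * r t - q t' * r t') >= 0) by lra.
  assert (0 < t' - t) by lra. nra.
Qed.

Lemma Xnn tl th r q u t : mechanism tl th r q u -> inTheta tl th t -> 0 <= q t * r t.
Proof. intros H Ht. destruct (H t Ht) as [[? ?] [? ?]]. nra. Qed.

Lemma det_cases tl th r q u t : mechanism tl th r q u -> deterministic tl th r -> inTheta tl th t ->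
  (r t = 1 /\ 0 < q t) \/ (r t = 0 /\ q t = 0).
Proof.
  intros Hm Hd Ht. destruct (Hm t Ht) as [Hr [Hq Hiff]].
  destruct (Hd t Ht) as [H|H].
  - right. split; auto. apply Hiff; auto.
  - left. split; auto. destruct Hq as [Hq|Hq]; auto. exfalso. symmetry in Hq. apply Hiff in Hq. lra.
Qed.

Lemma IC_prim tl th r2 q2 Y c0 : monoY Y tl th ->
  (forall t, inTheta tl th t -> q2 t * r2 t = Y t) -> IC tl th r2 q2 (Prim Y th c0).
Proof.
  intros HY HE t t' Ht Ht'. pose proof (Prim_IC Y tl th c0 HY t t' Ht Ht').
  rewrite <- (HE t' Ht') in H. lra.
Qed.

Lemma IC_pt tl th r q u r1 q1 t0 : IC tl th r q u ->
  (forall t, t <> t0 -> r1 t = r t /\ q1 t = q t) ->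
  (forall t, inTheta tl th t -> u t >= u t0 + (t0 - t) * q1 t0 * r1 t0) -> IC tl th r1 q1 u.
Proof.
  intros H Hag Ht0 t t' Ht Ht'.
  destruct (Req_dec t' t0) as [->|Hne]; [apply Ht0; auto|].
  destruct (Hag t' Hne) as [-> ->]. apply H; auto.
Qed.

Lemma undom_contra Q c alpha tl th r q u r' q' u' :
  undominated Q c alpha tl th r q u -> feasible tl th r' q' u' ->
  (forall t, inTheta tl th t -> RS Q c alpha t r' q' u' >= RS Q c alpha t r q u) ->
  (exists t, inTheta tl th t /\ RS Q c alpha t r' q' u' > RS Q c alpha t r q u) -> False.
Proof.
  intros [Hf Hn] Hf' H1 H2. apply Hn. exists r', q', u'. unfold dominates. auto.
Qed.

Lemma nec_CS tl th c alpha Q (Ha : 0 <= alpha < 1) (HQ : inverse_demand Q) r q u :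
  in_D Q c alpha tl th r q u ->
  forall t, inTheta tl th t -> r t = 1 -> Vf Q (q t) - q t * Q (q t) >= c.
Proof.
  intros [Hd Hu] t0 Ht0 Hr0.
  pose proof Hu as [[Hm [Hic Hir]] _].
  destruct (det_cases tl th r q u t0 Hm Hd Ht0) as [[_ Hx]|[H _]]; [|lra].
  set (x := q t0) in *.
  destruct (Rge_or_gt (Vf Q x - x * Q x) c) as [|Hlt]; [auto|exfalso].
  set (k := c - (Vf Q x - x * Q x)).
  assert (Hk : 0 < k) by (unfold k; lra).
  destruct (id_cont_eps Q HQ x ltac:(lra) (k / x) ltac:(apply Rdiv_lt_0_compat; lra)) as [d [Hd0 Hdl]].
  set (y := x + d / 2). set (rho := x / y).
  assert (Hy : x < y) by (unfold y; lra).
  assert (Hrho : 0 < rho < 1).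
  { unfold rho. split. apply Rdiv_lt_0_compat; lra. apply Rmult_lt_reg_r with y; [lra|]. unfold Rdiv. rewrite Rmult_assoc, Rinv_l by lra. lra. }
  assert (Hry : rho * y = x) by (unfold rho; field; lra).
  assert (HQy : Rabs (Q y - Q x) < k / x).
  { apply Hdl. unfold y; lra. unfold y. replace (x + d / 2 - x) with (d / 2) by ring.
    rewrite Rabs_pos_eq; lra. }
  assert (HQy' : x * Q y > x * Q x - k).
  { apply Rabs_def2 in HQy. destruct HQy as [_ HQy].
    assert (x * (k / x) = k) by (field; lra). nra. }
  assert (Hgain : rho * TS Q c t0 y > TS Q c t0 x).
  { rewrite !TS_pos by lra. unfold Vf in *.
    pose proof (Vdiff Q (id_nice Q HQ) x y ltac:(lra) ltac:(lra)) as E.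
    pose proof (int_bounds Q (id_nice Q HQ) x y ltac:(lra)) as [B1 _].
    assert (E2 : rho * (y - x) = (1 - rho) * x) by (rewrite Rmult_minus_distr_l; lra).
    assert (rho * (RInt Q x y) >= rho * ((y - x) * Q y)) by (apply Rmult_ge_compat_l; lra).
    assert (F1 : rho * ((y - x) * Q y) = (1 - rho) * (x * Q y)) by (rewrite <- Rmult_assoc, E2; ring).
    assert (F2 : (1 - rho) * (x * Q y) > (1 - rho) * (x * Q x - k)) by (apply Rmult_gt_compat_l; lra).
    assert (F3 : rho * RInt Q 0 y = rho * RInt Q 0 x + rho * RInt Q x y) by (rewrite <- E; ring).
    assert (F4 : rho * (RInt Q 0 y - c - t0 * y) = rho * RInt Q 0 y - rho * c - t0 * (rho * y)) by ring.
    rewrite F4, Hry, F3.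
    unfold k in F2. 
    assert (F5 : (1 - rho) * (x * Q x - (c - (RInt Q 0 x - x * Q x))) = (1 - rho) * (RInt Q 0 x - c)) by ring.
    lra. }
  apply (undom_contra Q c alpha tl th r q u (upd r t0 rho) (upd q t0 y) u Hu).
  - split; [|split].
    + intros t Ht. destruct (Req_dec t t0) as [->|Hne].
      * rewrite !upd_eq. split; [lra|]. split; [lra|]. split; intros; lra.
      * rewrite !upd_neq by auto. apply Hm; auto.
    + apply (IC_pt tl th r q u _ _ t0 Hic).
      * intros t Hne. rewrite !upd_neq by auto. auto.
      * intros t Ht. rewrite !upd_eq. pose proof (Hic t t0 Ht Ht0). fold x in H. rewrite Hr0 in H.
        assert ((t0 - t) * y * rho = (t0 - t) * x * 1) by (rewrite <- Hry; ring). lra.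
    + auto.
  - intros t Ht. unfold RS. destruct (Req_dec t t0) as [->|Hne].
    + rewrite !upd_eq. fold x. rewrite Hr0. lra.
    + rewrite !upd_neq by auto. lra.
  - exists t0. split; auto. unfold RS. rewrite !upd_eq. fold x. rewrite Hr0. lra.
Qed.

Lemma nec_price tl th c alpha Q (Ha : 0 <= alpha < 1) (HQ : inverse_demand Q) r q u :
  in_D Q c alpha tl th r q u ->
  forall t, inTheta tl th t -> r t = 1 -> Q (q t) >= t.
Proof.
  intros [Hd Hu] t0 Ht0 Hr0.
  pose proof Hu as [[Hm [Hic Hir]] _].
  destruct (det_cases tl th r q u t0 Hm Hd Ht0) as [[_ Hx]|[H _]]; [|lra].
  set (x := q t0) in *.
  destruct (Rge_or_gt (Q x) t0) as [|Hlt]; [auto|exfalso].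
  destruct (id_cont_eps Q HQ x ltac:(lra) (t0 - Q x) ltac:(lra)) as [d [Hd0 Hdl]].
  set (z := x - Rmin d x / 2).
  assert (Hmin : 0 < Rmin d x <= x /\ Rmin d x <= d) by (split; [split|]; [apply Rmin_glb_lt; lra|apply Rmin_r|apply Rmin_l]).
  assert (Hz : 0 < z < x) by (unfold z; lra).
  assert (HQz : Q z < t0).
  { assert (Rabs (Q z - Q x) < t0 - Q x).
    { apply Hdl. lra. unfold z. replace (x - Rmin d x / 2 - x) with (- (Rmin d x / 2)) by ring.
      rewrite Rabs_Ropp, Rabs_pos_eq; lra. }
    apply Rabs_def2 in H. lra. }
  set (q2 := fun t => if Rle_dec t0 t then Rmin (q t) z else q t).
  set (Y := fun t => if Rle_dec t0 t then Rmin (q t * r t) z else q t * r t).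
  assert (HY : forall t, inTheta tl th t -> q2 t * r t = Y t).
  { intros t Ht. unfold q2, Y. destruct (Rle_dec t0 t); [|reflexivity].
    destruct (det_cases tl th r q u t Hm Hd Ht) as [[-> Hq]|[-> ->]].
    - rewrite !Rmult_1_r. reflexivity.
    - rewrite Rmult_0_r. unfold Rmin. destruct (Rle_dec 0 z); destruct (Rle_dec (0*0) z); lra. }
  assert (HXnn : forall t, inTheta tl th t -> 0 <= q t * r t) by (intros; eapply Xnn; eauto).
  assert (HmY : monoY Y tl th).
  { split.
    - intros a b Ha1 Hab Hb2.
      pose proof (Xmono tl th r q u a b Hic Ha1 Hab Hb2).
      unfold Y. destruct (Rle_dec t0 a); destruct (Rle_dec t0 b); try lra;
      unfold Rmin; repeat destruct Rle_dec; lra.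
    - intros a Ha1. pose proof (HXnn a Ha1). unfold Y. destruct (Rle_dec t0 a); [|lra].
      unfold Rmin; destruct Rle_dec; lra. }
  assert (HYX : forall t, tl <= t <= th -> Y t <= q t * r t).
  { intros t Ht. unfold Y. destruct Rle_dec; [apply Rmin_l|lra]. }
  set (u2 := Prim Y th (u th)).
  assert (Hu2 : forall t, inTheta tl th t -> u2 t <= u t).
  { intros t Ht. unfold u2.
    pose proof (Prim_le Y tl th (u th) HmY (fun t => q t * r t) u
      ltac:(intros a b Ha1 Hab Hb2; apply (ICx tl th r q u a b Hic); unfold inTheta; lra) HYX t Ht). lra. }
  assert (HTS : forall t, inTheta tl th t -> r t = 1 -> TS Q c t (q2 t) >= TS Q c t (q t)).
  { intros t Ht Hr. destruct (det_cases tl th r q u t Hm Hd Ht) as [[_ Hq]|[H _]]; [|lra].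
    unfold q2. destruct (Rle_dec t0 t); [|lra].
    unfold Rmin. destruct (Rle_dec (q t) z); [lra|].
    left. apply TS_down; [apply id_nice; auto|apply id_sdec; auto|lra|lra]. }
  apply (undom_contra Q c alpha tl th r q u r q2 u2 Hu).
  - split; [|split].
    + intros t Ht. destruct (Hm t Ht) as [Hr1 _]. split; auto.
      destruct (det_cases tl th r q u t Hm Hd Ht) as [[Hr Hq]|[Hr Hq]]; unfold q2; rewrite Hr;
        destruct Rle_dec; rewrite ?Hq; unfold Rmin; repeat destruct Rle_dec; split; try lra; split; intros; lra.
    + apply IC_prim; auto.
    + intros t Ht. unfold u2. pose proof (Prim_nn Y tl th (u th) HmY t Ht).
      pose proof (Hir th ltac:(unfold inTheta in *; lra)). lra.
  - intros t Ht. unfold RS. pose proof (Hu2 t Ht).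
    destruct (det_cases tl th r q u t Hm Hd Ht) as [[Hr Hq]|[Hr Hq]]; rewrite Hr.
    + pose proof (HTS t Ht Hr). nra.
    + nra.
  - exists t0. split; auto. unfold RS. pose proof (Hu2 t0 Ht0). rewrite Hr0.
    assert (TS Q c t0 (q2 t0) > TS Q c t0 x).
    { unfold q2. destruct (Rle_dec t0 t0); [|lra]. fold x. unfold Rmin. destruct (Rle_dec x z); [lra|].
      apply TS_down; [apply id_nice; auto|apply id_sdec; auto|lra|lra]. }
    fold x. nra.
Qed.

Lemma A2_facts tl th c Q (Htl : 0 < tl) (Hth : tl < th) (HQ : inverse_demand Q) q0 :
  A2 Q c tl th -> 0 <= q0 -> Q q0 = tl -> 0 < q0 /\ TS Q c tl q0 > 0.
Proof.
  intros [qn [Hqn [HQn HTn]]] Hq0 HQ0.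
  assert (qn <> 0) by (intros ->; rewrite TS_0 in HTn; lra).
  assert (Hlt : qn < q0).
  { destruct (Rlt_or_le qn q0); auto. exfalso. destruct (Req_dec qn q0) as [->|]; [lra|].
    pose proof (id_sdec Q HQ q0 qn Hq0 ltac:(lra)). lra. }
  split; [lra|].
  pose proof (TS_up Q c tl qn q0 (id_nice Q HQ) (id_sdec Q HQ) ltac:(lra) ltac:(lra)).
  rewrite (TS_pos Q c th qn) in HTn by auto. rewrite (TS_pos Q c tl qn) in H0 by auto. nra.
Qed.

Lemma nec_low tl th c alpha Q (Htl : 0 < tl) (Hth : tl < th) (Ha : 0 <= alpha < 1) (HQ : inverse_demand Q) r q u q0 :
  A2 Q c tl th -> 0 <= q0 -> Q q0 = tl ->
  in_D Q c alpha tl th r q u -> r tl = 1 /\ q tl = q0.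
Proof.
  intros HA Hq0 HQ0 HD.
  destruct (A2_facts tl th c Q Htl Hth HQ q0 HA Hq0 HQ0) as [Hq0p HT0].
  pose proof HD as [Hd Hu]. pose proof Hu as [[Hm [Hic Hir]] _].
  assert (Htl' : inTheta tl th tl) by (unfold inTheta; lra).
  assert (HXle : q tl * r tl <= q0).
  { destruct (det_cases tl th r q u tl Hm Hd Htl') as [[Hr Hq]|[Hr Hq]]; rewrite Hr, ?Hq; [|lra].
    pose proof (nec_price tl th c alpha Q Ha HQ r q u HD tl Htl' Hr).
    rewrite Rmult_1_r. destruct (Rle_or_lt (q tl) q0); auto.
    pose proof (id_sdec Q HQ q0 (q tl) Hq0 H0). lra. }
  assert (Hgain : TS Q c tl q0 > r tl * TS Q c tl (q tl) \/ (r tl = 1 /\ q tl = q0)).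
  { destruct (det_cases tl th r q u tl Hm Hd Htl') as [[Hr Hq]|[Hr Hq]]; rewrite Hr.
    - rewrite Hr, Rmult_1_r in HXle. destruct (Req_dec (q tl) q0) as [E|E]; [right; auto|left].
      rewrite Rmult_1_l. apply TS_up; [apply id_nice; auto|apply id_sdec; auto|lra|lra].
    - left. lra. }
  destruct Hgain as [Hgain|]; auto. exfalso.
  apply (undom_contra Q c alpha tl th r q u (upd r tl 1) (upd q tl q0) u Hu).
  - split; [|split].
    + intros t Ht. destruct (Req_dec t tl) as [->|Hne].
      * rewrite !upd_eq. split; [lra|]. split; [lra|]. split; intros; lra.
      * rewrite !upd_neq by auto. apply Hm; auto.
    + apply (IC_pt tl th r q u _ _ tl Hic).
      * intros t Hne. rewrite !upd_neq by auto. auto.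
      * intros t Ht. rewrite !upd_eq. pose proof (Hic t tl Ht Htl'). unfold inTheta in Ht.
        assert ((tl - t) * q0 * 1 <= (tl - t) * q tl * r tl) by nra. lra.
    + auto.
  - intros t Ht. unfold RS. destruct (Req_dec t tl) as [->|Hne].
    + rewrite !upd_eq. lra.
    + rewrite !upd_neq by auto. lra.
  - exists tl. split; auto. unfold RS. rewrite !upd_eq. lra.
Qed.

Record Hyp (tl th c alpha : R) (P Pn : R -> R) (q0 : R) (r q u r' q' u' : R -> R) : Prop := {
 h_tl : 0 < tl; h_th : tl < th; h_al : 0 <= alpha < 1;
 h_P : inverse_demand P; h_Pn : inverse_demand Pn; h_A2n : A2 Pn c tl th;
 h_diff : forall x y, 0 <= y -> y < x -> P x - Pn x < P y - Pn y;
 h_q0 : 0 <= q0; h_Pq0 : P q0 = tl; h_Pnq0 : Pn q0 = tl;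
 h_D : in_D Pn c alpha tl th r q u;
 h_f' : feasible tl th r' q' u';
 h_ge : forall t, inTheta tl th t -> RS P c alpha t r' q' u' >= RS P c alpha t r q u }.

Definition dd (P Pn : R -> R) := fun x => P x - Pn x.

Lemma dd_nice P Pn : inverse_demand P -> inverse_demand Pn ->
  (forall x y, 0 <= y -> y < x -> P x - Pn x < P y - Pn y) -> nice (dd P Pn) /\ sdec (dd P Pn).
Proof.
  intros HP HPn Hd. split; [split|].
  - intros x y Hx Hy. unfold dd. apply (ex_RInt_minus (V:=R_NormedModule)); apply id_ex_RInt; auto.
  - intros x y Hx Hxy. unfold dd. destruct (Req_dec x y) as [->|]; [lra|]. left. apply Hd; lra.
  - intros x y Hx Hxy. unfold dd. apply Hd; auto.
Qed.

Lemma dd_V P Pn y : inverse_demand P -> inverse_demand Pn -> 0 <= y ->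
  Vf P y - Vf Pn y = RInt (dd P Pn) 0 y.
Proof.
  intros HP HPn Hy. unfold Vf, dd.
  pose proof (RInt_minus (V:=R_CompleteNormedModule) P Pn 0 y
    ltac:(apply id_ex_RInt; auto; lra) ltac:(apply id_ex_RInt; auto; lra)) as E.
  simpl in E. unfold minus, plus, opp in E. simpl in E. unfold Rminus. rewrite <- E. reflexivity.
Qed.

Lemma transfer tl th c alpha P Pn q0 r q u r' q' u' :
  Hyp tl th c alpha P Pn q0 r q u r' q' u' ->
  forall t, inTheta tl th t -> r t = 1 ->
  0 < q t <= q0 /\ P (q t) >= t /\ Vf P (q t) - q t * P (q t) >= c /\ Pn (q t) >= t
  /\ Vf Pn (q t) - q t * Pn (q t) >= c.
Proof.
  intros H t Ht Hr. destruct H.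
  pose proof h_D0 as [Hd Hu]. pose proof Hu as [[Hm [Hic Hir]] _].
  destruct (det_cases tl th r q u t Hm Hd Ht) as [[_ Hq]|[H _]]; [|lra].
  pose proof (nec_price tl th c alpha Pn h_al0 h_Pn0 r q u h_D0 t Ht Hr) as Hpr.
  pose proof (nec_CS tl th c alpha Pn h_al0 h_Pn0 r q u h_D0 t Ht Hr) as Hcs.
  assert (Hle : q t <= q0).
  { destruct (Rle_or_lt (q t) q0); auto. pose proof (id_sdec Pn h_Pn0 q0 (q t) h_q1 H).
    unfold inTheta in Ht. lra. }
  destruct (dd_nice P Pn h_P0 h_Pn0 h_diff0) as [Hdn Hds].
  assert (Hdx : 0 <= dd P Pn (q t)).
  { destruct Hdn as [_ Hm']. pose proof (Hm' (q t) q0 ltac:(lra) Hle). unfold dd in *. lra. }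
  pose proof (dd_V P Pn (q t) h_P0 h_Pn0 ltac:(lra)) as EV.
  pose proof (int_bounds (dd P Pn) Hdn 0 (q t) ltac:(lra)) as [B1 _].
  unfold dd in Hdx, B1. fold (dd P Pn) in B1.
  repeat split; try lra; nra.
Qed.

Lemma gain tl th c alpha P Pn q0 r q u r' q' u' :
  Hyp tl th c alpha P Pn q0 r q u r' q' u' ->
  forall t, inTheta tl th t -> (q' t * r' t <= q t * r t \/ t = tl) ->
  RS P c alpha t r' q' u' - RS P c alpha t r q u <= (1 - alpha) * (u t - u' t).
Proof.
  intros H t Ht Hor. pose proof (transfer _ _ _ _ _ _ _ _ _ _ _ _ _ H) as Htr. destruct H.
  pose proof h_D0 as [Hd Hu]. pose proof Hu as [[Hm [Hic Hir]] _].
  destruct h_f'0 as [Hm' [Hic' Hir']].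
  destruct (nec_low tl th c alpha Pn h_tl0 h_th0 h_al0 h_Pn0 r q u q0 h_A2n0 h_q1 h_Pnq1 h_D0) as [Hrl Hql].
  assert (r' t * TS P c t (q' t) <= r t * TS P c t (q t)); [|unfold RS; lra].
  destruct (Hm' t Ht) as [Hr' [Hq' Hiff']].
  destruct (det_cases tl th r q u t Hm Hd Ht) as [[Hr Hq]|[Hr Hq]].
  - destruct (Htr t Ht Hr) as [Hq0 [HPq [HCS _]]]. rewrite Hr, Rmult_1_l.
    apply TS_opt; try (apply id_nice; auto); try lra.
    destruct Hor as [Hor| ->]; [left; rewrite Hr in Hor; lra|right; rewrite Hql; lra].
  - rewrite Hr. destruct Hor as [Hor| ->]; [|lra].
    rewrite Hr, Hq in Hor.
    assert (q' t * r' t = 0) by nra.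
    destruct (Rmult_integral _ _ H) as [E|E].
    + apply Hiff' in E. rewrite E. lra.
    + rewrite E. lra.
Qed.

Lemma pointwise tl th c alpha P Pn q0 r q u r' q' u' :
  Hyp tl th c alpha P Pn q0 r q u r' q' u' ->
  forall t, inTheta tl th t -> (q' t * r' t <= q t * r t \/ t = tl) -> u' t <= u t.
Proof.
  intros H t Ht Hor. pose proof (gain _ _ _ _ _ _ _ _ _ _ _ _ _ H t Ht Hor).
  pose proof (h_ge _ _ _ _ _ _ _ _ _ _ _ _ _ H t Ht). pose proof (h_al _ _ _ _ _ _ _ _ _ _ _ _ _ H). nra.
Qed.

Lemma disc (g F : nat -> R) h n : 0 <= h -> g 0%nat <= 0 -> (forall j, (j <= n)%nat -> F j <= F 0%nat) ->
  (forall j, (j < n)%nat -> 0 < g (S j) -> g (S j) <= g j + h * (F j - F (S j))) ->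
  forall j, (j <= n)%nat -> g j <= h * (F 0%nat - F j).
Proof.
  intros Hh Hg0 HF Hs. induction j as [|j IH]; intros Hj.
  - lra.
  - assert (IH' := IH ltac:(lia)). pose proof (HF (S j) Hj).
    destruct (Rle_or_lt (g (S j)) 0).
    + nra.
    + pose proof (Hs j ltac:(lia) H0). nra.
Qed.

Lemma ule tl th c alpha P Pn q0 r q u r' q' u' :
  Hyp tl th c alpha P Pn q0 r q u r' q' u' ->
  forall t, inTheta tl th t -> u' t <= u t.
Proof.
  intros H t1 Ht1.
  pose proof (pointwise _ _ _ _ _ _ _ _ _ _ _ _ _ H) as Hpw.
  pose proof H as [Htl Hth _ _ _ _ _ _ _ _ HD [Hm' [Hic' Hir']] _].
  pose proof HD as [Hd Hu]. pose proof Hu as [[Hm [Hic Hir]] _].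
  assert (Htl' : inTheta tl th tl) by (unfold inTheta; lra).
  destruct (Req_dec t1 tl) as [->|Hne]; [apply Hpw; auto|].
  destruct (Rle_or_lt (u' t1 - u t1) 0) as [|Hg]; [lra|exfalso].
  set (g1 := u' t1 - u t1) in *.
  set (K := (t1 - tl) * (q tl * r tl)).
  assert (HK : 0 <= K).
  { unfold K. pose proof (Xnn tl th r q u tl Hm Htl'). unfold inTheta in Ht1. nra. }
  destruct (archimed_cor1 (g1 / (K + 1)) ltac:(apply Rdiv_lt_0_compat; lra)) as [N [HN HN0]].
  assert (HNp : 0 < INR N) by (apply lt_0_INR; auto).
  unfold inTheta in Ht1.
  set (h := (t1 - tl) / INR N).
  assert (Hh : 0 < h) by (unfold h; apply Rdiv_lt_0_compat; lra).
  set (tj := fun j : nat => tl + INR j * h).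
  assert (Htj : forall j, (j <= N)%nat -> inTheta tl th (tj j)).
  { intros j Hj. unfold tj, inTheta. apply le_INR in Hj. pose proof (pos_INR j).
    assert (INR j * h <= INR N * h) by nra.
    assert (INR N * h = t1 - tl) by (unfold h; field; lra). nra. }
  assert (HtN : tj N = t1) by (unfold tj, h; field; lra).
  pose proof (disc (fun j => u' (tj j) - u (tj j)) (fun j => q (tj j) * r (tj j)) h N ltac:(lra)) as Hdisc.
  assert (Ht0 : tj 0%nat = tl) by (unfold tj; simpl; ring).
  specialize (Hdisc ltac:(simpl; rewrite Ht0; pose proof (Hpw tl Htl' (or_intror eq_refl)); lra)).
  specialize (Hdisc ltac:(intros j Hj; simpl; rewrite Ht0;
     apply (Xmono tl th r q u tl (tj j) Hic); pose proof (Htj j Hj); unfold inTheta in *; lra)).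
  specialize (Hdisc ltac:(
    intros j Hj Hpos; simpl in *;
    assert (HS : tj (S j) = tj j + h) by (unfold tj; rewrite S_INR; ring);
    pose proof (Htj j ltac:(lia)) as Hj1; pose proof (Htj (S j) ltac:(lia)) as Hj2;
    assert (Hx : q' (tj (S j)) * r' (tj (S j)) > q (tj (S j)) * r (tj (S j)))
      by (destruct (Rle_or_lt (q' (tj (S j)) * r' (tj (S j))) (q (tj (S j)) * r (tj (S j)))) as [Hl|Hl];
          [pose proof (Hpw _ Hj2 (or_introl Hl)); lra | exact Hl]);
    pose proof (ICx tl th r' q' u' (tj j) (tj (S j)) Hic' Hj1 Hj2);
    pose proof (ICx tl th r q u (tj (S j)) (tj j) Hic Hj2 Hj1);
    rewrite HS in *; nra)).
  specialize (Hdisc N (le_n N)). simpl in Hdisc. rewrite Ht0, HtN in Hdisc. fold g1 in Hdisc.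
  pose proof (Xnn tl th r q u t1 Hm ltac:(unfold inTheta; lra)).
  assert (h * (q tl * r tl) = K * / INR N) by (unfold K, h; field; lra).
  assert (K * / INR N <= K * (g1 / (K + 1))) by (apply Rmult_le_compat_l; lra).
  assert (K * (g1 / (K + 1)) < g1).
  { unfold Rdiv. assert (EE : K * (g1 * / (K + 1)) = g1 * (K / (K + 1))) by (field; lra).
    rewrite EE. assert (K / (K + 1) < 1) by (apply Rmult_lt_reg_r with (K+1); [lra|]; unfold Rdiv; rewrite Rmult_assoc, Rinv_l; lra).
    nra. }
  nra.
Qed.

Lemma TSdiff P Pn c t y : inverse_demand P -> inverse_demand Pn -> 0 <= y ->
  TS P c t y - TS Pn c t y = RInt (dd P Pn) 0 y.
Proof.
  intros HP HPn Hy. destruct (Req_dec y 0) as [->|Hne].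
  - rewrite !TS_0, RInt_point. unfold zero; simpl; ring.
  - rewrite !TS_pos by auto. pose proof (dd_V P Pn y HP HPn Hy). lra.
Qed.

Lemma Dlem f q0 x rho y : nice f -> f q0 = 0 -> 0 < x <= q0 -> 0 <= rho <= 1 -> 0 <= y -> rho * y <= x ->
  rho * RInt f 0 y <= RInt f 0 x.
Proof.
  intros Hf Hq0 Hx Hr Hy Hry.
  pose proof Hf as [_ Hm].
  assert (Hfx : 0 <= f x) by (pose proof (Hm x q0 ltac:(lra) ltac:(lra)); lra).
  pose proof (int_bounds f Hf 0 x ltac:(lra)) as [Bx _].
  set (w := rho * y) in *.
  assert (Hw : 0 <= w) by (unfold w; nra).
  pose proof (Vdiff f Hf w x Hw ltac:(lra)) as E1.
  pose proof (int_bounds f Hf w x ltac:(lra)) as [B1 _].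
  pose proof (Hm w x Hw Hry).
  assert (0 <= (x - w) * f x) by (apply Rmult_le_pos; lra).
  assert (Hwx : RInt f 0 w <= RInt f 0 x) by lra.
  destruct (Req_dec rho 0) as [->|Hr0].
  - rewrite Rmult_0_l. pose proof (Hm 0 x ltac:(lra) ltac:(lra)). nra.
  - assert (Hwy : w <= y) by (unfold w; nra).
    pose proof (Vdiff f Hf w y Hw Hy) as E2.
    pose proof (int_bounds f Hf w y ltac:(lra)) as [_ B2].
    pose proof (int_bounds f Hf 0 w ltac:(lra)) as [B3 _].
    (* rho D(y) <= rho D(w) + rho (y-w) f w = rho D(w) + (1-rho) w f w <= D(w) *)
    assert (rho * RInt f 0 y <= rho * RInt f 0 w + rho * ((y - w) * f w)).
    { rewrite <- Rmult_plus_distr_l. apply Rmult_le_compat_l; lra. }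
    assert (rho * ((y - w) * f w) = (1 - rho) * ((w - 0) * f w)) by (unfold w; ring).
    assert ((1 - rho) * ((w - 0) * f w) <= (1 - rho) * RInt f 0 w) by (apply Rmult_le_compat_l; lra).
    nra.
Qed.

Lemma step2 tl th c alpha P Pn q0 r q u r' q' u' :
  Hyp tl th c alpha P Pn q0 r q u r' q' u' ->
  (exists ts, inTheta tl th ts /\ RS P c alpha ts r' q' u' > RS P c alpha ts r q u /\
     (q' ts * r' ts < q ts * r ts \/ u' ts < u ts)) -> False.
Proof.
  intros H [ts [Hts [Hstr Hcase]]].
  pose proof (ule _ _ _ _ _ _ _ _ _ _ _ _ _ H) as Hule.
  pose proof (transfer _ _ _ _ _ _ _ _ _ _ _ _ _ H) as Htr.
  pose proof H as [Htl Hth Hal HP HPn _ Hdf Hq0 HPq0 HPnq0 HD [Hm' [Hic' Hir']] Hge].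
  pose proof HD as [Hd Hu]. pose proof Hu as [[Hm [Hic Hir]] _].
  destruct (dd_nice P Pn HP HPn Hdf) as [Hdn Hds].
  assert (Hthe : inTheta tl th th) by (unfold inTheta; lra).
  set (Xf := fun t => q t * r t). set (Xp := fun t => q' t * r' t).
  set (r2 := fun t => if Rlt_dec (Xp t) (Xf t) then r' t else r t).
  set (q2 := fun t => if Rlt_dec (Xp t) (Xf t) then q' t else q t).
  set (Y := fun t => Rmin (Xf t) (Xp t)).
  assert (HY : forall t, inTheta tl th t -> q2 t * r2 t = Y t).
  { intros t Ht. unfold q2, r2, Y. destruct (Rlt_dec (Xp t) (Xf t)).
    - rewrite (Rmin_right (Xf t) (Xp t)) by lra. reflexivity.
    - rewrite (Rmin_left (Xf t) (Xp t)) by lra. reflexivity. }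
  assert (HmY : monoY Y tl th).
  { split.
    - intros a b Ha1 Hab Hb2.
      pose proof (Xmono tl th r q u a b Hic Ha1 Hab Hb2).
      pose proof (Xmono tl th r' q' u' a b Hic' Ha1 Hab Hb2).
      unfold Y, Xf, Xp. unfold Rmin; repeat destruct Rle_dec; lra.
    - intros a Ha1. pose proof (Xnn tl th r q u a Hm Ha1). pose proof (Xnn tl th r' q' u' a Hm' Ha1).
      unfold Y, Xf, Xp. unfold Rmin; destruct Rle_dec; lra. }
  set (u2 := Prim Y th (u' th)).
  assert (Hu2a : forall t, inTheta tl th t -> u2 t <= u' t).
  { intros t Ht. unfold u2.
    pose proof (Prim_le Y tl th (u' th) HmY Xp u'
      ltac:(intros a b Ha1 Hab Hb2; apply (ICx tl th r' q' u' a b Hic'); unfold inTheta; lra)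
      ltac:(intros x Hx; unfold Y; apply Rmin_r) t Ht). lra. }
  assert (Hu2b : forall t, inTheta tl th t -> u2 t <= u t).
  { intros t Ht. unfold u2.
    pose proof (Prim_le Y tl th (u' th) HmY Xf u
      ltac:(intros a b Ha1 Hab Hb2; apply (ICx tl th r q u a b Hic); unfold inTheta; lra)
      ltac:(intros x Hx; unfold Y; apply Rmin_l) t Ht).
    pose proof (Hule th Hthe). lra. }
  assert (Hcmp : forall t, inTheta tl th t -> Xp t < Xf t ->
     RS Pn c alpha t r2 q2 u2 - RS Pn c alpha t r q u >= RS P c alpha t r' q' u' - RS P c alpha t r q u).
  { intros t Ht Hlt. unfold RS, r2, q2. destruct (Rlt_dec (Xp t) (Xf t)); [|lra].
    destruct (Hm' t Ht) as [Hr' [Hq' _]].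
    destruct (det_cases tl th r q u t Hm Hd Ht) as [[Hr Hq]|[Hr Hq]].
    2:{ exfalso. pose proof (Xnn tl th r' q' u' t Hm' Ht). unfold Xf, Xp in Hlt. rewrite Hr, Hq in Hlt. lra. }
    destruct (Htr t Ht Hr) as [Hqq _].
    pose proof (TSdiff P Pn c t (q' t) HP HPn Hq').
    pose proof (TSdiff P Pn c t (q t) HP HPn ltac:(lra)).
    pose proof (Dlem (dd P Pn) q0 (q t) (r' t) (q' t) Hdn ltac:(unfold dd; lra) Hqq Hr' Hq'
       ltac:(unfold Xp, Xf in Hlt; rewrite Hr in Hlt; lra)).
    pose proof (Hu2a t Ht). pose proof Hal.
    assert (EE : r' t * TS P c t (q' t) - r' t * TS Pn c t (q' t) = r' t * RInt (dd P Pn) 0 (q' t)).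
    { rewrite <- Rmult_minus_distr_l. f_equal. lra. }
    assert ((1 - alpha) * u2 t <= (1 - alpha) * u' t) by (apply Rmult_le_compat_l; lra).
    rewrite Hr. lra. }
  assert (Hcmp2 : forall t, inTheta tl th t -> ~ Xp t < Xf t ->
     RS Pn c alpha t r2 q2 u2 - RS Pn c alpha t r q u = (1 - alpha) * (u t - u2 t)).
  { intros t Ht Hn. unfold RS, r2, q2. destruct (Rlt_dec (Xp t) (Xf t)); [contradiction|]. ring. }
  apply (undom_contra Pn c alpha tl th r q u r2 q2 u2 Hu).
  - split; [|split].
    + intros t Ht. unfold r2, q2. destruct (Rlt_dec (Xp t) (Xf t)); [apply Hm'|apply Hm]; auto.
    + apply IC_prim; auto.
    + intros t Ht. unfold u2. pose proof (Prim_nn Y tl th (u' th) HmY t Ht). pose proof (Hir' th Hthe). lra.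
  - intros t Ht. destruct (Rlt_dec (Xp t) (Xf t)) as [Hl|Hl].
    + pose proof (Hcmp t Ht Hl). pose proof (Hge t Ht). lra.
    + pose proof (Hcmp2 t Ht Hl). pose proof (Hu2b t Ht). nra.
  - exists ts. split; auto. destruct (Rlt_dec (Xp ts) (Xf ts)) as [Hl|Hl].
    + pose proof (Hcmp ts Hts Hl). lra.
    + pose proof (Hcmp2 ts Hts Hl). pose proof (Hu2a ts Hts).
      destruct Hcase as [Hc|Hc]; [unfold Xp, Xf in Hl; contradiction|]. nra.
Qed.

Lemma case_c tl th c alpha P Pn q0 r q u r' q' u' :
  Hyp tl th c alpha P Pn q0 r q u r' q' u' ->
  forall ts, inTheta tl th ts -> RS P c alpha ts r' q' u' > RS P c alpha ts r q u ->
  q ts * r ts <= q' ts * r' ts -> u ts <= u' ts -> False.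
Proof.
  intros H ts Hts Hstr Hle Hueq.
  pose proof (ule _ _ _ _ _ _ _ _ _ _ _ _ _ H) as Hule.
  pose proof (transfer _ _ _ _ _ _ _ _ _ _ _ _ _ H) as Htr.
  pose proof (gain _ _ _ _ _ _ _ _ _ _ _ _ _ H) as Hgain.
  pose proof H as [Htl Hth Hal HP HPn HA2n Hdf Hq0 HPq0 HPnq0 HD [Hm' [Hic' Hir']] Hge].
  pose proof HD as [Hd Hu]. pose proof Hu as [[Hm [Hic Hir]] _].
  pose proof (Hule ts Hts) as Hu1.
  assert (Hst : q ts * r ts < q' ts * r' ts).
  { destruct (Req_dec (q ts * r ts) (q' ts * r' ts)) as [E|E]; [|lra].
    exfalso. pose proof (Hgain ts Hts (or_introl (Req_le _ _ (eq_sym E)))). nra. }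
  assert (Hts1 : tl < ts).
  { destruct (Req_dec ts tl) as [E|E].
    - exfalso. pose proof (Hgain ts Hts (or_intror E)). nra.
    - unfold inTheta in Hts. lra. }
  set (Xf := fun t => q t * r t) in *. set (Xp := fun t => q' t * r' t) in *.
  assert (Hbel : forall t, tl <= t < ts -> Xp ts <= Xf t).
  { intros t Ht. assert (Hti : inTheta tl th t) by (unfold inTheta in *; lra).
    pose proof (Hule t Hti).
    pose proof (ICx tl th r' q' u' t ts Hic' Hti Hts).
    pose proof (ICx tl th r q u ts t Hic Hts Hti).
    fold (Xp ts) in H1. fold (Xf t) in H2.
    assert ((ts - t) * Xp ts <= (ts - t) * Xf t) by lra.
    apply Rmult_le_reg_l in H3; lra. }
  set (E := fun z => exists t, tl <= t < ts /\ z = Xf t).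
  assert (HL : exists L, (forall t, tl <= t < ts -> L <= Xf t) /\ Xp ts <= L /\
            (forall d, 0 < d -> exists t, tl <= t < ts /\ Xf t < L + d)).
  { pose proof (Glb_Rbar_correct E) as [H1 H2].
    assert (Hlb : is_lb_Rbar E (Xp ts)) by (intros z [t [Ht ->]]; simpl; apply Hbel; auto).
    assert (Hne : E (Xf tl)) by (exists tl; split; [lra|reflexivity]).
    destruct (Glb_Rbar E) as [L| |] eqn:HG.
    - exists L. split; [|split].
      + intros t Ht. apply (H1 (Xf t)). exists t; auto.
      + apply (H2 _ Hlb).
      + intros d Hd0. destruct (Classical_Prop.classic (exists t, tl <= t < ts /\ Xf t < L + d)) as [|Hn]; auto.
        exfalso. assert (is_lb_Rbar E (L + d)).
        { intros z [t [Ht ->]]. simpl. destruct (Rle_or_lt (L + d) (Xf t)); auto. exfalso; apply Hn; exists t; auto. }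
        specialize (H2 _ H0). simpl in H2. lra.
    - exfalso. specialize (H1 _ Hne). simpl in H1. exact H1.
    - exfalso. specialize (H2 _ Hlb). simpl in H2. exact H2. }
  destruct HL as [L [HL1 [HL2 HL3]]].
  assert (HXts : 0 <= Xf ts) by (apply (Xnn tl th r q u ts Hm Hts)).
  assert (HLp : 0 < L) by (unfold Xf, Xp in *; lra).
  assert (Hserv : forall t, tl <= t < ts -> r t = 1 /\ q t = Xf t).
  { intros t Ht. assert (Hti : inTheta tl th t) by (unfold inTheta in *; lra).
    pose proof (HL1 t Ht). unfold Xf in *.
    destruct (det_cases tl th r q u t Hm Hd Hti) as [[Hr Hq]|[Hr Hq]]; rewrite Hr in *.
    - split; auto; ring.
    - rewrite Hq in H0. lra. }
  assert (HPnL : Pn L >= ts).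
  { assert (Hall : forall t, tl <= t < ts -> Pn L >= t).
    { intros t Ht. assert (Hti : inTheta tl th t) by (unfold inTheta in *; lra).
      destruct (Hserv t Ht) as [Hr Hq].
      destruct (Htr t Hti Hr) as [Hqp [_ [_ [HPn' _]]]].
      pose proof (HL1 t Ht). rewrite <- Hq in H0.
      pose proof (id_nice Pn HPn) as [_ Hmn]. pose proof (Hmn L (q t) ltac:(lra) H0). lra. }
    destruct (Rge_or_gt (Pn L) ts) as [|Hlt]; auto. exfalso.
    pose proof (Hall tl ltac:(lra)).
    pose proof (Hall ((Pn L + ts) / 2) ltac:(lra)). lra. }
  assert (HTSg : TS Pn c ts L > r ts * TS Pn c ts (q ts)).
  { destruct (det_cases tl th r q u ts Hm Hd Hts) as [[Hr Hq]|[Hr Hq]]; rewrite Hr.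
    - rewrite Rmult_1_l. apply TS_up; [apply id_nice; auto|apply id_sdec; auto| |lra].
      unfold Xf, Xp in *. rewrite Hr in *. lra.
    - rewrite Rmult_0_l.
      destruct HA2n as [qn [Hqn [HPqn HTn]]].
      assert (qn <> 0) by (intros ->; rewrite TS_0 in HTn; lra).
      destruct (Rle_or_lt qn L) as [HqL|HqL].
      + assert (TS Pn c ts qn > 0).
        { rewrite (TS_pos Pn c th qn) in HTn by auto. rewrite TS_pos by auto. unfold inTheta in Hts. nra. }
        destruct (Req_dec qn L) as [<-|Hne]; [lra|].
        pose proof (TS_up Pn c ts qn L (id_nice Pn HPn) (id_sdec Pn HPn) ltac:(lra) HPnL). lra.
      + assert (HPL : Pn L > th) by (pose proof (id_sdec Pn HPn L qn ltac:(lra) HqL); lra).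
        assert (HCS : Vf Pn L - L * Pn L >= c).
        { destruct (Rge_or_gt (Vf Pn L - L * Pn L) c) as [|Hk]; auto. exfalso.
          set (k := c - (Vf Pn L - L * Pn L)).
          destruct (id_cont_eps Pn HPn L ltac:(lra) (k / (2 * (L + 1))) ltac:(unfold k; apply Rdiv_lt_0_compat; lra)) as [dl [Hdl Hdc]].
          destruct (HL3 (Rmin dl 1) ltac:(apply Rmin_glb_lt; lra)) as [t [Ht Hxt]].
          pose proof (Rmin_l dl 1). pose proof (Rmin_r dl 1).
          assert (Hti : inTheta tl th t) by (unfold inTheta in *; lra).
          destruct (Hserv t Ht) as [Hr1 Hq1].
          destruct (Htr t Hti Hr1) as [_ [_ [_ [_ HCSz]]]].
          rewrite Hq1 in HCSz. set (z := Xf t) in *.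
          pose proof (HL1 t Ht) as HzL. fold z in HzL.
          assert (Habs : Rabs (Pn z - Pn L) < k / (2 * (L + 1))).
          { apply Hdc. lra. rewrite Rabs_pos_eq; lra. }
          apply Rabs_def2 in Habs.
          pose proof (Vdiff Pn (id_nice Pn HPn) L z ltac:(lra) ltac:(lra)).
          pose proof (int_bounds Pn (id_nice Pn HPn) L z ltac:(lra)) as [_ B2].
          unfold Vf in *.
          assert (z * (Pn L - Pn z) <= (L + 1) * (k / (2 * (L + 1)))).
          { pose proof (id_nice Pn HPn) as [_ Hmn]. pose proof (Hmn L z ltac:(lra) HzL).
            apply Rmult_le_compat; lra. }
          assert ((L + 1) * (k / (2 * (L + 1))) = k / 2) by (field; lra).
          unfold k in *. nra. }
        rewrite TS_pos by lra. assert (0 < (Pn L - ts) * L) by (apply Rmult_lt_0_compat; unfold inTheta in Hts; lra). lra. }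
  apply (undom_contra Pn c alpha tl th r q u (upd r ts 1) (upd q ts L) u Hu).
  - split; [|split].
    + intros t Ht. destruct (Req_dec t ts) as [->|Hne].
      * rewrite !upd_eq. split; [lra|]. split; [lra|]. split; intros; lra.
      * rewrite !upd_neq by auto. apply Hm; auto.
    + apply (IC_pt tl th r q u _ _ ts Hic).
      * intros t Hne. rewrite !upd_neq by auto. auto.
      * intros t Ht. rewrite !upd_eq. rewrite Rmult_1_r.
        destruct (Rle_or_lt ts t) as [Hge'|Hlt'].
        -- pose proof (ICx tl th r q u t ts Hic Ht Hts). fold (Xf ts) in H0.
           assert (Xf ts <= L) by (unfold Xf, Xp in *; lra). assert ((ts - t) * L <= (ts - t) * Xf ts) by nra. lra.
        -- destruct (Rge_or_gt (u t) (u ts + (ts - t) * L)) as [|Hc]; auto. exfalso.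
           set (e := (ts - t) * L - (u t - u ts)).
           assert (He : 0 < e) by (unfold e; lra).
           set (m := Rmin (e / (2 * L)) ((ts - t) / 2)).
           assert (Hm1 : 0 < m) by (unfold m; apply Rmin_glb_lt; apply Rdiv_lt_0_compat; lra).
           pose proof (Rmin_l (e / (2 * L)) ((ts - t) / 2)). pose proof (Rmin_r (e / (2 * L)) ((ts - t) / 2)).
           fold m in H0, H1.
           set (s := ts - m).
           unfold inTheta in Ht.
           assert (Hsi : inTheta tl th s) by (unfold inTheta, s in *; lra).
           pose proof (ICx tl th r q u t s Hic ltac:(unfold inTheta; lra) Hsi).
           pose proof (ICx tl th r q u s ts Hic Hsi Hts).
           fold (Xf s) in H2. fold (Xf ts) in H3.
           pose proof (HL1 s ltac:(unfold s; lra)).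
           assert ((s - t) * L <= (s - t) * Xf s) by (apply Rmult_le_compat_l; unfold s in *; lra).
           assert (0 <= (ts - s) * Xf ts) by (apply Rmult_le_pos; unfold s in *; lra).
           assert (m * L <= e / 2).
           { assert (m * L <= (e / (2 * L)) * L) by (apply Rmult_le_compat_r; lra).
             assert (e / (2 * L) * L = e / 2) by (field; lra). lra. }
           assert ((s - t) * L = (ts - t) * L - m * L) by (unfold s; ring).
           unfold e in *. lra.
    + auto.
  - intros t Ht. unfold RS. destruct (Req_dec t ts) as [->|Hne].
    + rewrite !upd_eq. lra.
    + rewrite !upd_neq by auto. lra.
  - exists ts. split; auto. unfold RS. rewrite !upd_eq. lra.
Qed.


Theorem proposition5 (tl th c alpha : R) (P Pn : R -> R)
  (Htl : 0 < tl) (Hth : tl < th) (Hc : 0 < c) (Halpha : 0 <= alpha < 1)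
  (HP : inverse_demand P) (HPn : inverse_demand Pn)
  (HA2 : A2 P c tl th) (HA2n : A2 Pn c tl th)
  (Hdiff : forall q q', 0 <= q' -> q' < q -> P q - Pn q < P q' - Pn q')
  (Hlow : exists q, 0 <= q /\ P q = tl /\ Pn q = tl) :
  forall r q u : R -> R,
    in_D Pn c alpha tl th r q u -> in_D P c alpha tl th r q u.
Proof.
  intros r q u HD.
  destruct Hlow as [q0 [Hq0 [HPq0 HPnq0]]].
  pose proof HD as [Hd [Hf _]].
  split; [exact Hd|]. split; [exact Hf|].
  intros [r' [q' [u' [Hf' [_ [Hge [ts [Hts Hstr]]]]]]]].
  assert (H : Hyp tl th c alpha P Pn q0 r q u r' q' u').
  { constructor; auto. }
  destruct (Rlt_or_le (q' ts * r' ts) (q ts * r ts)) as [H1|H1].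
  - apply (step2 _ _ _ _ _ _ _ _ _ _ _ _ _ H). exists ts. auto.
  - destruct (Rlt_or_le (u' ts) (u ts)) as [H2|H2].
    + apply (step2 _ _ _ _ _ _ _ _ _ _ _ _ _ H). exists ts. auto.
    + exact (case_c _ _ _ _ _ _ _ _ _ _ _ _ _ H ts Hts Hstr H1 H2).
Qed.
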